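(* Let $e\in\mathbb{R}^n$ satisfy $\|e\|=\sqrt n$, and let $0<\beta\le\alpha<\sqrt n$. Assume $\bar s$ lies in the interior of $K_e(\beta)^*$, and assume $\bar x$ solves \[ \min_x\ \bar s^Tx\quad\text{s.t.}\quad x\in e+L,\ x\in K_e(\alpha), \] where $L$ is a linear subspace with $e\notin L$ and $\bar s\notin L^\perp$. Then there exists $\bar s'\in(\bar s+L^\perp)\cap K_e(\alpha)^*$ satisfying $e^T(\bar s-\bar s')\ge\mathcal{C}_1\mathcal{C}_2\|\bar s\|$, where \[ \mathcal{C}_1:=\left(\frac{(n-\alpha^2)\|\bar x\|^2\big(1-(\beta/\alpha)^2\big)}{n-\alpha^2+(\|\bar x\|-\alpha)^2\big(1-(\beta/\alpha)^2\big)}\right)^{1/2},\qquad \mathcal{C}_2:=\frac1n\Big(\alpha\sqrt{n-\beta^2}-\beta\sqrt{n-\alpha^2}\Big). \]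
   Context: $\mathbb{R}^n$ carries the dot product and Euclidean norm $\|\cdot\|$. For $0<\gamma<\sqrt n$, $K_e(\gamma):=\{x:e^Tx\ge\gamma\|x\|\}$ and $K_e(\gamma)^*:=\{s:x^Ts\ge0\ \forall x\in K_e(\gamma)\}$ (which equals $\{s:e^Ts\ge\sqrt{n-\gamma^2}\|s\|\}$). $e+L=\{e+v:v\in L\}$, and $L^\perp$ is the orthogonal complement of $L$. *)

(* Defs.v *)
From mathcomp Require Import all_boot all_order all_algebra.
From mathcomp Require Import reals.
Set Implicit Arguments. Unset Strict Implicit. Unset Printing Implicit Defensive.
Import Order.TTheory GRing.Theory Num.Theory.
Local Open Scope ring_scope.

Definition dotp {R : realType} {n : nat} (u v : 'rV[R]_n) : R :=
  \sum_(i < n) u 0 i * v 0 i.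
Definition enorm {R : realType} {n : nat} (u : 'rV[R]_n) : R :=
  Num.sqrt (dotp u u).

Definition Kcone {R : realType} {n : nat} (e : 'rV[R]_n) (g : R) (x : 'rV[R]_n) : Prop :=
  g * enorm x <= dotp e x.

Definition Kdual {R : realType} {n : nat} (e : 'rV[R]_n) (g : R) (s : 'rV[R]_n) : Prop :=
  forall x, Kcone e g x -> 0 <= dotp x s.

Definition interior_of {R : realType} {n : nat} (S : 'rV[R]_n -> Prop) (s : 'rV[R]_n) : Prop :=
  exists2 eps : R, 0 < eps & forall t, enorm (t - s) < eps -> S t.

Definition orthc {R : realType} {n : nat} (L : {vspace 'rV[R]_n}) (s : 'rV[R]_n) : Prop :=
  forall v, v \in L -> dotp v s = 0.

(* Main.v *)
Require Import Defs.
From mathcomp Require Import all_boot all_order all_algebra.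
From mathcomp Require Import reals.
From mathcomp Require Import ring lra.
Import Order.TTheory GRing.Theory Num.Theory.
Local Open Scope ring_scope.


Lemma dotpC {R : realType} {n : nat} (u v : 'rV[R]_n) : dotp u v = dotp v u.
Proof. by rewrite /dotp; apply: eq_bigr => i _; rewrite mulrC. Qed.

Lemma dotpDl {R : realType} {n : nat} (u v w : 'rV[R]_n) :
  dotp (u + v) w = dotp u w + dotp v w.
Proof. by rewrite /dotp -big_split; apply: eq_bigr => i _; rewrite mxE mulrDl. Qed.

Lemma dotpZl {R : realType} {n : nat} (k : R) (u v : 'rV[R]_n) :
  dotp (k *: u) v = k * dotp u v.
Proof. by rewrite /dotp mulr_sumr; apply: eq_bigr => i _; rewrite mxE mulrA. Qed.

Lemma dotpNl {R : realType} {n : nat} (u v : 'rV[R]_n) : dotp (- u) v = - dotp u v.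
Proof. by rewrite -scaleN1r dotpZl mulN1r. Qed.

Lemma dotpBl {R : realType} {n : nat} (u v w : 'rV[R]_n) :
  dotp (u - v) w = dotp u w - dotp v w.
Proof. by rewrite dotpDl dotpNl. Qed.

Lemma dotpDr {R : realType} {n : nat} (u v w : 'rV[R]_n) :
  dotp w (u + v) = dotp w u + dotp w v.
Proof. by rewrite dotpC dotpDl !(dotpC w). Qed.

Lemma dotpZr {R : realType} {n : nat} (k : R) (u v : 'rV[R]_n) :
  dotp v (k *: u) = k * dotp v u.
Proof. by rewrite dotpC dotpZl dotpC. Qed.

Lemma dotpNr {R : realType} {n : nat} (u v : 'rV[R]_n) : dotp v (- u) = - dotp v u.
Proof. by rewrite dotpC dotpNl dotpC. Qed.

Lemma dotpBr {R : realType} {n : nat} (u v w : 'rV[R]_n) :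
  dotp w (u - v) = dotp w u - dotp w v.
Proof. by rewrite dotpDr dotpNr. Qed.

Lemma dotp0l {R : realType} {n : nat} (u : 'rV[R]_n) : dotp 0 u = 0.
Proof. by rewrite /dotp big1 // => i _; rewrite mxE mul0r. Qed.

Lemma dotp_ge0 {R : realType} {n : nat} (u : 'rV[R]_n) : 0 <= dotp u u.
Proof. by rewrite /dotp; apply: sumr_ge0 => i _; rewrite -expr2 sqr_ge0. Qed.

Lemma dotp_eq0 {R : realType} {n : nat} (u : 'rV[R]_n) : dotp u u = 0 -> u = 0.
Proof.
move=> H; have := psumr_eq0P (P := predT) _ H => /= H'.
apply/rowP => i; rewrite mxE; apply/eqP; rewrite -sqrf_eq0 expr2.
by rewrite H' // => j _; rewrite -expr2 sqr_ge0.
Qed.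

Lemma enorm_sq {R : realType} {n : nat} (u : 'rV[R]_n) : enorm u ^+ 2 = dotp u u.
Proof. by rewrite /enorm sqr_sqrtr // dotp_ge0. Qed.

Lemma enorm_ge0 {R : realType} {n : nat} (u : 'rV[R]_n) : 0 <= enorm u.
Proof. exact: sqrtr_ge0. Qed.

Lemma CS2 {R : realType} {n : nat} (u v : 'rV[R]_n) :
  dotp u v ^+ 2 <= dotp u u * dotp v v.
Proof.
have [v0|vn0] := eqVneq v 0.
  by rewrite v0 dotpC dotp0l dotp0l expr2 !mulr0.
have C : 0 < dotp v v.
  rewrite lt_def dotp_ge0 andbT; apply/eqP => /dotp_eq0 h; by rewrite h eqxx in vn0.
set t := dotp u v / dotp v v.
have := dotp_ge0 (u - t *: v).
rewrite !(dotpBl, dotpBr, dotpZl, dotpZr) (dotpC v u) => h.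
have e : t * dotp v v = dotp u v by rewrite /t mulfVK // gt_eqF.
have h2 : 0 <= dotp u u - t * dotp u v.
  by move: h; rewrite e subrr mulr0 subr0.
have h3 : 0 <= (dotp u u - t * dotp u v) * dotp v v by apply: mulr_ge0 => //; apply: ltW.
move: h3; rewrite mulrBl -mulrA (mulrC (dotp u v)) mulrA e expr2. lra.
Qed.

Lemma CS {R : realType} {n : nat} (u v : 'rV[R]_n) :
  `|dotp u v| <= enorm u * enorm v.
Proof.
have h := CS2 u v.
rewrite -(enorm_sq u) -(enorm_sq v) -exprMn -(real_normK (num_real (dotp u v))) in h.
have a := mulr_ge0 (enorm_ge0 u) (enorm_ge0 v).
have b := normr_ge0 (dotp u v).
nra.
Qed.

Lemma CSu {R : realType} {n : nat} (u v : 'rV[R]_n) : dotp u v <= enorm u * enorm v.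
Proof. exact: le_trans (ler_norm _) (CS u v). Qed.

Lemma CSl {R : realType} {n : nat} (u v : 'rV[R]_n) : - (enorm u * enorm v) <= dotp u v.
Proof. by rewrite lerNl; apply: le_trans (ler_norm _) _; rewrite normrN CS. Qed.

Lemma Nnorm_le {R : realType} (x : R) : - `|x| <= x.
Proof. by rewrite lerNl -normrN ler_norm. Qed.

Lemma ev {R : realType} (c0 c1 c2 : R) : 0 <= c0 -> (0 < c0 \/ 0 < c1) ->
  exists2 t, 0 < t & forall s, 0 < s -> s <= t -> 0 < c0 + c1 * s + c2 * s ^+ 2.
Proof.
move=> c0ge [c0p|c1p].
- set K := `|c1| + `|c2|.
  have Kge : 0 <= K by rewrite addr_ge0.
  have Dp : 0 < c0 + K + 1 by lra.
  set t := c0 / (c0 + K + 1).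
  have tp : 0 < t by rewrite divr_gt0.
  have te : t * (c0 + K + 1) = c0 by rewrite /t mulfVK // gt_eqF.
  exists t => // s sp st.
  have t1 : t <= 1 by nra.
  have h1 : - `|c1| * s <= c1 * s by rewrite ler_pM2r // Nnorm_le.
  have h2 : - `|c2| * s ^+ 2 <= c2 * s ^+ 2 by rewrite ler_pM2r ?exprn_gt0 // Nnorm_le.
  have h3 : s ^+ 2 <= s by rewrite expr2; nra.
  have h4 : `|c2| * s ^+ 2 <= `|c2| * s by rewrite ler_wpM2l.
  have h5 : K * s <= K * t by rewrite ler_wpM2l.
  rewrite /K in h5 te; nra.
- set t := c1 / (c1 + `|c2| + 1).
  have Dp : 0 < c1 + `|c2| + 1 by have := normr_ge0 c2; lra.
  have tp : 0 < t by rewrite divr_gt0.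
  have te : t * (c1 + `|c2| + 1) = c1 by rewrite /t mulfVK // gt_eqF.
  exists t => // s sp st.
  have h2 : - `|c2| * s ^+ 2 <= c2 * s ^+ 2 by rewrite ler_pM2r ?exprn_gt0 // Nnorm_le.
  have h5 : `|c2| * s <= `|c2| * t by rewrite ler_wpM2l.
  have h6 : 0 < c1 - `|c2| * s by have := normr_ge0 c2; nra.
  have h7 : 0 < s * (c1 - `|c2| * s) by rewrite mulr_gt0.
  move: h7; rewrite expr2 in h2 *; nra.
Qed.

Lemma eqW {R : realType} (x y : R) : x = y -> x <= y.
Proof. by move->. Qed.

Ltac dsimp := rewrite ?(dotpDl, dotpDr, dotpBl, dotpBr, dotpZl, dotpZr, dotpNl, dotpNr).

Lemma sq_le {R : realType} (a b : R) : 0 <= b -> a ^+ 2 <= b ^+ 2 -> a <= b.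
Proof. move=> b0 h; have [a0|a0] := leP 0 a; nra. Qed.

Lemma dualchar {R : realType} {n : nat} (e s : 'rV[R]_n) (N beta : R) :
  dotp e e = N -> 0 < N -> 0 < beta -> beta ^+ 2 < N -> 0 <= dotp e s ->
  Kdual e beta s -> Num.sqrt (N - beta ^+ 2) * enorm s <= dotp e s.
Proof.
move=> ee Np bp bN Fge Ks.
set F := dotp e s.
set D := N * dotp s s - F ^+ 2.
set w := N *: s - F *: e.
have ww : dotp w w = N * D.
  rewrite /w /D; dsimp; rewrite (dotpC s e) ee -/F; rewrite expr2; ring.
have ew : dotp e w = 0 by rewrite /w; dsimp; rewrite ee -/F; ring.
have ws : dotp w s = D by rewrite /w /D; dsimp; rewrite -/F expr2; ring.
have Dge : 0 <= D.
  have := dotp_ge0 w; rewrite ww => h; nra.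
set sg := Num.sqrt D.
set rb := Num.sqrt (N - beta ^+ 2).
have sg2 : sg ^+ 2 = D by rewrite sqr_sqrtr.
have rb2 : rb ^+ 2 = N - beta ^+ 2 by rewrite sqr_sqrtr // subr_ge0 ltW.
have sgge : 0 <= sg by apply: sqrtr_ge0.
have rbge : 0 <= rb by apply: sqrtr_ge0.
set xt := (beta * sg) *: e - rb *: w.
have Kx : Kcone e beta xt.
  have xx : dotp xt xt = (N * sg) ^+ 2.
    rewrite /xt; dsimp; rewrite (dotpC s e) ee -/F.
    transitivity (beta ^+ 2 * sg ^+ 2 * N + rb ^+ 2 * N * (N * dotp s s - F ^+ 2)); first ring.
    by rewrite rb2 -/D exprMn sg2; ring.
  rewrite /Kcone /enorm xx sqrtr_sqr ger0_norm; last by rewrite mulr_ge0 // ltW.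
  by rewrite /xt dotpBr !dotpZr ee ew mulr0 subr0 mulrA mulrAC.
have := Ks _ Kx; rewrite /xt dotpBl !dotpZl (dotpC e s) -/F ws => h.
have FF : (N - beta ^+ 2) * dotp s s <= F ^+ 2.
  have [sg0|sgp] := eqVneq sg 0.
    have : D = 0 by rewrite -sg2 sg0 expr2 mul0r.
    rewrite /D => D0. have := dotp_ge0 s. nra.
  have sgp' : 0 < sg by rewrite lt_def sgp sgge.
  have h1 : rb * sg <= beta * F.
    rewrite -(ler_pM2r sgp') -/F; rewrite -sg2 expr2 (dotpC s e) -/F in h; nra.
  have h2 : (rb * sg) ^+ 2 <= (beta * F) ^+ 2.
    by rewrite ler_sqr ?nnegrE ?mulr_ge0 // ltW.
  rewrite !exprMn rb2 sg2 /D in h2. nra.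
apply: sq_le => //.
rewrite exprMn rb2 enorm_sq //.
Qed.

Lemma perpb {R : realType} {n : nat} (e x s : 'rV[R]_n) (N alpha beta : R) :
  dotp e e = N -> 0 < N -> 0 < beta -> beta <= alpha -> alpha ^+ 2 < N ->
  dotp e x = alpha * enorm x ->
  Num.sqrt (N - beta ^+ 2) * enorm s <= dotp e s ->
  enorm x * enorm s * (alpha * Num.sqrt (N - beta ^+ 2) - beta * Num.sqrt (N - alpha ^+ 2))
    <= N * dotp s x.
Proof.
move=> ee Np bp ba aN Ex Fb.
set X := enorm x; set S := enorm s; set F := dotp e s; set P := dotp s x.
set E := dotp e x in Ex.
rewrite -/X in Ex; rewrite -/S -/F in Fb.
set r := Num.sqrt N; set ra := Num.sqrt (N - alpha ^+ 2); set rb := Num.sqrt (N - beta ^+ 2).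
have r2 : r ^+ 2 = N by rewrite sqr_sqrtr // ltW.
have ra2 : ra ^+ 2 = N - alpha ^+ 2 by rewrite sqr_sqrtr // subr_ge0 ltW.
have rb2 : rb ^+ 2 = N - beta ^+ 2.
  rewrite sqr_sqrtr // subr_ge0.
  have : beta ^+ 2 <= alpha ^+ 2 by rewrite !expr2; nra.
  lra.
have rge : 0 <= r by apply: sqrtr_ge0.
have rage : 0 <= ra by apply: sqrtr_ge0.
have rbge : 0 <= rb by apply: sqrtr_ge0.
have Xge : 0 <= X by apply: enorm_ge0.
have Sge : 0 <= S by apply: enorm_ge0.
have X2 : X ^+ 2 = dotp x x by apply: enorm_sq.
have S2 : S ^+ 2 = dotp s s by apply: enorm_sq.
have ap : 0 < alpha by apply: lt_le_trans ba.
set xp := N *: x - E *: e.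
set sp := N *: s - F *: e.
have xs : dotp xp sp = N * (N * P - E * F).
  rewrite /xp /sp; dsimp; rewrite (dotpC x e) (dotpC x s) -/P ee -/E -/F; ring.
have xx : dotp xp xp = (r * X * ra) ^+ 2.
  rewrite /xp; dsimp; rewrite (dotpC x e) ee -/E !exprMn r2 ra2 X2 Ex -X2; ring.
have ss : dotp sp sp <= (r * beta * S) ^+ 2.
  rewrite /sp; dsimp; rewrite (dotpC s e) ee -/F !exprMn r2 -S2.
  have h : (rb * S) ^+ 2 <= F ^+ 2 by rewrite ler_sqr ?nnegrE ?mulr_ge0 //; apply: le_trans Fb; rewrite mulr_ge0.
  rewrite exprMn rb2 in h. nra.
have nx : enorm xp = r * X * ra.
  by rewrite /enorm xx sqrtr_sqr ger0_norm // !mulr_ge0.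
have ns : enorm sp <= r * beta * S.
  rewrite /enorm -(ger0_norm (x := r * beta * S)); last by rewrite !mulr_ge0 // ltW.
  by rewrite -sqrtr_sqr; apply: ler_wsqrtr.
have cs := CSl xp sp.
rewrite nx xs in cs.
have h1 : r * X * ra * enorm sp <= r * X * ra * (r * beta * S) by rewrite ler_wpM2l // !mulr_ge0.
have h2 : - (N * X * ra * beta * S) <= N * (N * P - E * F).
  apply: le_trans cs; rewrite lerN2; apply: le_trans h1 _.
  by rewrite -r2 expr2; apply/eqW; ring.
have h3 : - (X * ra * beta * S) <= N * P - E * F.
  rewrite -(ler_pM2l Np); move: h2; apply: le_trans; apply/eqW; ring.
have h4 : alpha * X * (rb * S) <= alpha * X * F by rewrite ler_wpM2l // mulr_ge0 // ltW.
rewrite Ex in h3. nra.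
Qed.

Theorem proposition5p1 (R : realType) (n : nat) (e : 'rV[R]_n) (alpha beta : R)
  (L : {vspace 'rV[R]_n}) (sbar xbar : 'rV[R]_n) :
  enorm e = Num.sqrt (n%:R) ->
  0 < beta -> beta <= alpha -> alpha < Num.sqrt (n%:R) ->
  interior_of (Kdual e beta) sbar ->
  e \notin L ->
  ~ orthc L sbar ->
  (* xbar solves min sbar^T x s.t. x in e + L, x in K_e(alpha) *)
  (xbar - e \in L) -> Kcone e alpha xbar ->
  (forall x, x - e \in L -> Kcone e alpha x -> dotp sbar xbar <= dotp sbar x) ->
  let C1 := Num.sqrt
      (((n%:R - alpha ^+ 2) * enorm xbar ^+ 2 * (1 - (beta / alpha) ^+ 2)) /
       (n%:R - alpha ^+ 2 + (enorm xbar - alpha) ^+ 2 * (1 - (beta / alpha) ^+ 2))) in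
  let C2 := (n%:R)^-1 *
      (alpha * Num.sqrt (n%:R - beta ^+ 2) - beta * Num.sqrt (n%:R - alpha ^+ 2)) in
  exists s' : 'rV[R]_n,
    orthc L (s' - sbar) /\ Kdual e alpha s' /\
    C1 * C2 * enorm sbar <= dotp e (sbar - s').
Proof.
move=> He bp ba aN Hint eL nort xL xK opt C1 C2.
have N0 : 0 <= (n%:R : R) := ler0n _ _.
set N := (n%:R : R) in N0 He aN C1 C2 *.
have ap : 0 < alpha by apply: lt_le_trans ba.
set r := Num.sqrt N in He aN.
have r2 : r ^+ 2 = N by rewrite sqr_sqrtr.
have rge : 0 <= r by apply: sqrtr_ge0.
have aN2 : alpha ^+ 2 < N by rewrite -r2 !expr2; nra.
have Np : 0 < N by have := sqr_ge0 alpha; rewrite expr2 in aN2 *; nra.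
have bN2 : beta ^+ 2 < N by apply: le_lt_trans aN2; rewrite !expr2; nra.
have ee : dotp e e = N by rewrite -enorm_sq He r2.
have eK : forall g, 0 <= g -> g <= alpha -> Kcone e g e.
  move=> g g0 ga; rewrite /Kcone He ee -r2 expr2; nra.
have sK : Kdual e beta sbar.
  case: Hint => eps ep H; apply: H; rewrite subrr /enorm dotp0l sqrtr0 //.
have Fge : 0 <= dotp e sbar by apply: sK; apply: eK; [exact: ltW|].
have Fb := @dualchar _ _ e sbar N beta ee Np bp bN2 Fge sK.
set X := enorm xbar in C1 *.
have xn0 : xbar != 0.
  apply/eqP => x0; move: xL; rewrite x0 sub0r memvN => h; by rewrite h in eL.
have Xge : 0 <= X by apply: enorm_ge0.
have Xp : 0 < X.
  rewrite lt_def Xge andbT; apply/eqP => X0; have := enorm_sq xbar.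
  rewrite -/X X0 expr2 mul0r => /esym /dotp_eq0 h; by rewrite h eqxx in xn0.
set E := dotp e xbar in xK *.
have EX : alpha * X <= E := xK.
have dir : forall d, d \in L -> (0 < E ^+ 2 - alpha ^+ 2 * X ^+ 2 \/
     0 < E * dotp e d - alpha ^+ 2 * dotp xbar d) -> 0 <= dotp sbar d.
  move=> d dL hd.
  have G0 : 0 <= E ^+ 2 - alpha ^+ 2 * X ^+ 2.
    have : 0 <= alpha * X by rewrite mulr_ge0 // ltW.
    rewrite !expr2; nra.
  have hd' : 0 < E ^+ 2 - alpha ^+ 2 * X ^+ 2 \/
     0 < 2 * (E * dotp e d - alpha ^+ 2 * dotp xbar d).
    case: hd => h; [by left | by right; rewrite mulr_gt0].
  have [t1 t1p H1] := ev _ _ (dotp e d ^+ 2 - alpha ^+ 2 * dotp d d) G0 hd'.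
  have Ep : 0 < E by apply: lt_le_trans EX; rewrite mulr_gt0.
  have [t2 t2p H2] := ev _ (dotp e d) 0 (ltW Ep) (or_introl Ep).
  set t := Order.min t1 t2.
  have tp : 0 < t by rewrite lt_min t1p t2p.
  have tt1 : t <= t1 by rewrite ge_min lexx.
  have tt2 : t <= t2 by rewrite ge_min lexx orbT.
  have h1 := H1 t tp tt1.
  have h2 := H2 t tp tt2.
  set y := xbar + t *: d.
  have yL : y - e \in L by rewrite /y addrAC; apply: memvD => //; apply: memvZ.
  have ey : dotp e y = E + t * dotp e d by rewrite /y dotpDr dotpZr.
  have yy : dotp y y = X ^+ 2 + 2 * t * dotp xbar d + t ^+ 2 * dotp d d.
    rewrite /y; dsimp; rewrite (dotpC d xbar) -(enorm_sq xbar) -/X; ring.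
  have yK : Kcone e alpha y.
    rewrite /Kcone; apply: sq_le; first by rewrite ey; lra.
    rewrite exprMn enorm_sq yy ey.
    have ide : (E + t * dotp e d) ^+ 2 - alpha ^+ 2 * (X ^+ 2 + 2 * t * dotp xbar d + t ^+ 2 * dotp d d)
      = E ^+ 2 - alpha ^+ 2 * X ^+ 2 + 2 * (E * dotp e d - alpha ^+ 2 * dotp xbar d) * t
        + (dotp e d ^+ 2 - alpha ^+ 2 * dotp d d) * t ^+ 2 by ring.
    lra.
  have := opt y yL yK; rewrite /y dotpDr dotpZr => h.
  have : 0 <= t * dotp sbar d by lra.
  by rewrite pmulr_rge0.
have Eb : E = alpha * X.
  apply/eqP; rewrite eq_le EX andbT leNgt; apply/negP => hlt.
  apply: nort => v vL.
  have G : 0 < E ^+ 2 - alpha ^+ 2 * X ^+ 2.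
    have : 0 <= alpha * X by rewrite mulr_ge0 // ltW.
    rewrite !expr2; nra.
  have a1 := dir v vL (or_introl G).
  have vL' : - v \in L by rewrite memvN.
  have a2 := dir (- v) vL' (or_introl G).
  rewrite dotpNr in a2; rewrite dotpC; lra.
set a := e - (alpha / X) *: xbar.
set d0 := e - xbar.
have d0L : d0 \in L by rewrite /d0 -opprB memvN.
have Xne : X != 0 by rewrite gt_eqF.
have aX : (alpha / X) * X = alpha by rewrite mulfVK.
have xx : dotp xbar xbar = X ^+ 2 by rewrite -enorm_sq.
have ad : forall d, dotp a d = dotp e d - (alpha / X) * dotp xbar d.
  by move=> d; rewrite /a dotpBl dotpZl.
have ae : dotp a e = N - alpha ^+ 2.
  rewrite ad ee (dotpC xbar e) -/E Eb; field; exact: Xne.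
have ax : dotp a xbar = 0.
  rewrite ad -/E Eb xx; field; exact: Xne.
have ad0 : dotp a d0 = N - alpha ^+ 2 by rewrite /d0 dotpBr ae ax subr0.
have Nap : 0 < N - alpha ^+ 2 by rewrite subr_gt0.
have dir2 : forall d, d \in L -> 0 < dotp a d -> 0 <= dotp sbar d.
  move=> d dL h; apply: dir => //; right.
  have -> : E * dotp e d - alpha ^+ 2 * dotp xbar d = alpha * X * dotp a d.
    rewrite ad Eb; field; exact: Xne.
  by rewrite !mulr_gt0.
have sd0 : 0 <= dotp sbar d0.
  have e0 : e - e \in L by rewrite subrr mem0v.
  have := opt e e0 (eK alpha (ltW ap) (lexx _)).
  rewrite /d0 dotpBr; lra.
have w0 : forall w, w \in L -> dotp a w = 0 -> 0 <= dotp sbar w.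
  move=> w wL aw; rewrite leNgt; apply/negP => hneg.
  set c := dotp sbar d0 in sd0.
  have cp : 0 < 2 * (c + 1) by lra.
  set eps := - dotp sbar w / (2 * (c + 1)).
  have epsp : 0 < eps by rewrite divr_gt0 // oppr_gt0.
  have epse : eps * (2 * (c + 1)) = - dotp sbar w by rewrite mulfVK // gt_eqF.
  have wL' : w + eps *: d0 \in L by apply: memvD => //; apply: memvZ.
  have ap' : 0 < dotp a (w + eps *: d0) by rewrite dotpDr dotpZr aw ad0 add0r mulr_gt0.
  have := dir2 _ wL' ap'; rewrite dotpDr dotpZr -/c => h.
  have := mulr_ge0 (ltW epsp) sd0.
  lra.
set lam := dotp sbar d0 / (N - alpha ^+ 2).
have lame : lam * (N - alpha ^+ 2) = dotp sbar d0 by rewrite mulfVK // gt_eqF.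
have lamge : 0 <= lam by rewrite divr_ge0 // ltW.
exists (lam *: a); split; [|split].
- move=> v vL.
  set c := dotp a v / (N - alpha ^+ 2).
  set w := v - c *: d0.
  have wL : w \in L by apply: memvB => //; apply: memvZ.
  have aw : dotp a w = 0 by rewrite /w dotpBr dotpZr ad0 /c mulfVK ?subrr // gt_eqF.
  have wL' : - w \in L by rewrite memvN.
  have aw' : dotp a (- w) = 0 by rewrite dotpNr aw oppr0.
  have s1 := w0 w wL aw.
  have s2 := w0 _ wL' aw'.
  rewrite dotpNr in s2.
  rewrite /w dotpBr dotpZr in s1 s2.
  have sv : dotp sbar v = c * dotp sbar d0 by lra.
  rewrite dotpBr dotpZr (dotpC v a) (dotpC v sbar) sv /lam /c; ring.
- move=> x xK'.
  rewrite dotpZr; apply: mulr_ge0 => //.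
  rewrite (dotpC x a) ad (dotpC xbar x).
  have h := CSu x xbar; rewrite -/X in h.
  have aX0 : 0 <= alpha / X by rewrite divr_ge0 // ltW.
  have h' := ler_wpM2l aX0 h.
  rewrite (mulrC (enorm x)) mulrA aX in h'.
  rewrite /Kcone in xK'; lra.
- rewrite dotpBr dotpZr (dotpC e a) ae lame /d0 dotpBr (dotpC sbar e).
  have pb := @perpb _ _ e xbar sbar N alpha beta ee Np bp ba aN2 Eb Fb.
  rewrite -/X in pb.
  set S := enorm sbar in pb *.
  set ra := Num.sqrt (N - alpha ^+ 2) in pb.
  set rb := Num.sqrt (N - beta ^+ 2) in pb.
  have rale : ra <= rb by apply: ler_wsqrtr; rewrite lerB // !expr2; nra.
  have rage : 0 <= ra by apply: sqrtr_ge0.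
  have Sge : 0 <= S by apply: enorm_ge0.
  have K0 : 0 <= alpha * rb - beta * ra.
    rewrite subr_ge0; apply: le_trans (_ : beta * rb <= _).
      by rewrite ler_wpM2l // ltW.
    by rewrite ler_wpM2r // (le_trans rage rale).
  have C2ge : 0 <= C2 by rewrite /C2 -/ra -/rb mulr_ge0 // invr_ge0.
  have C1le : C1 <= X.
    rewrite /C1 -[X in _ <= X](ger0_norm Xge) -sqrtr_sqr; apply: ler_wsqrtr.
    set k := 1 - (beta / alpha) ^+ 2.
    have ba1 : beta / alpha <= 1 by rewrite ler_pdivrMr // mul1r.
    have ba0 : 0 <= beta / alpha by rewrite divr_ge0 // ltW.
    have k0 : 0 <= k by rewrite /k subr_ge0 expr_le1.
    have k1 : k <= 1 by rewrite /k lerBlDr lerDl sqr_ge0.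
    have den : 0 < N - alpha ^+ 2 + (X - alpha) ^+ 2 * k by rewrite ltr_wpDr // mulr_ge0 // sqr_ge0.
    rewrite ler_pdivrMr //.
    have f1 : 0 <= X ^+ 2 * (N - alpha ^+ 2) * (1 - k) by apply: mulr_ge0; [apply: mulr_ge0; [apply: sqr_ge0 | lra] | lra].
    have f2 : 0 <= X ^+ 2 * ((X - alpha) ^+ 2 * k) by apply: mulr_ge0; [apply: sqr_ge0 | apply: mulr_ge0; [apply: sqr_ge0 | lra]].
    have ide : X ^+ 2 * (N - alpha ^+ 2 + (X - alpha) ^+ 2 * k) - (N - alpha ^+ 2) * X ^+ 2 * k
      = X ^+ 2 * (N - alpha ^+ 2) * (1 - k) + X ^+ 2 * ((X - alpha) ^+ 2 * k) by ring.
    lra.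
  have step1 : C1 * C2 * S <= X * C2 * S by rewrite ler_wpM2r // ler_wpM2r.
  have step2 : X * C2 * S <= dotp sbar xbar.
    rewrite /C2 -/ra -/rb -(ler_pM2l Np).
    apply: le_trans pb; apply: eqW; field; exact: lt0r_neq0 Np.
  lra.
Qed.
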